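(* For all formulas $\varphi_1,\psi_1,\psi_2$ and every formula with placeholders $\varphi_2$: $\varphi_1\,\mathbf{W}\,\varphi_2[\psi_1\mathbf{U}\psi_2] \equiv (\varphi_1\,\mathbf{U}\,\varphi_2[\psi_1\mathbf{U}\psi_2]) \vee \mathbf{G}\varphi_1$. Moreover, for every formula with placeholders $\varphi_1$ and all formulas $\varphi_2,\psi_1,\psi_2$: $\varphi_1[\psi_1\mathbf{U}\psi_2]\,\mathbf{W}\,\varphi_2 \equiv (\mathbf{GF}\psi_2 \wedge \varphi_1[\psi_1\mathbf{W}\psi_2]\,\mathbf{W}\,\varphi_2) \vee \varphi_1[\psi_1\mathbf{U}\psi_2]\,\mathbf{U}\,(\varphi_2 \vee \mathbf{G}\varphi_1[\mathbf{false}])$.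
   Context: Fix a finite set $Ap$ of atomic propositions. A word is an infinite sequence $w = w[0]w[1]\dots$ of letters of $2^{Ap}$, and $w_i$ denotes the suffix $w[i]w[i+1]\dots$. Formulas are generated by $\varphi ::= \mathbf{true} \mid \mathbf{false} \mid a \mid \neg a \mid \varphi\wedge\varphi \mid \varphi\vee\varphi \mid \mathbf{X}\varphi \mid \varphi\,\mathbf{U}\,\varphi \mid \varphi\,\mathbf{W}\,\varphi \mid \mathbf{GF}\varphi \mid \mathbf{FG}\varphi$ ($a\in Ap$), where $\mathbf{GF}$, $\mathbf{FG}$ are single unary operators. Semantics: $w\models a$ iff $a\in w[0]$, $w\models\neg a$ iff $a\notin w[0]$, Boolean constants and connectives as usual; $w\models\mathbf{X}\varphi$ iff $w_1\models\varphi$; $w\models\varphi\mathbf{U}\psi$ iff $\exists k$: $w_k\models\psi$ and $\forall j<k$: $w_j\models\varphi$; $w\models\varphi\mathbf{W}\psi$ iff ($\forall k$: $w_k\models\varphi$) or $w\models\varphi\mathbf{U}\psi$; $w\models\mathbf{GF}\varphi$ iff $w_k\models\varphi$ for infinitely many $k$; $w\models\mathbf{FG}\varphi$ iff $\exists n\,\forall k\geq n$: $w_k\models\varphi$. $\mathbf{G}\varphi$ abbreviates $\varphi\,\mathbf{W}\,\mathbf{false}$ (so $w\models\mathbf{G}\varphi$ iff $w_k\models\varphi$ for all $k$). $\varphi\equiv\psi$ means both formulas are satisfied by exactly the same words. A formula with placeholders is a formula over $Ap\cup\{\star\}$, where $\star$ is a special fresh atomic proposition, with at least one occurrence of $\star$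 and no occurrence of $\neg\star$; for such $\varphi$ and a formula $\psi$, $\varphi[\psi]$ denotes the result of substituting $\psi$ for every occurrence of $\star$. Substitution binds more strongly than any operator, e.g. $\varphi_1\,\mathbf{W}\,\varphi_2[\psi]$ means $\varphi_1\,\mathbf{W}\,(\varphi_2[\psi])$. *)

(* Defs.v *)
From mathcomp Require Import all_boot.
Set Implicit Arguments. Unset Strict Implicit. Unset Printing Implicit Defensive.

(* LTL formulas in negation normal form over atomic propositions of type A *)
Inductive formula (A : Type) : Type :=
| FTrue | FFalse
| FAtom of A
| FNAtom of A
| FAnd of formula A & formula A
| FOr of formula A & formula A
| FX of formula A
| FU of formula A & formula A
| FW of formula A & formula A
| FGF of formula A
| FFG of formula A.

Arguments FTrue {A}. Arguments FFalse {A}.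

Definition FG (A : Type) (f : formula A) : formula A := FW f FFalse.

Definition word (Ap : finType) := nat -> {set Ap}.
Definition suffix (Ap : finType) (w : word Ap) (i : nat) : word Ap :=
  fun k => w (i + k).

Fixpoint sat (Ap : finType) (w : word Ap) (f : formula Ap) : Prop :=
  match f with
  | FTrue => True
  | FFalse => False
  | FAtom a => a \in w 0
  | FNAtom a => a \notin w 0
  | FAnd f1 f2 => sat w f1 /\ sat w f2
  | FOr f1 f2 => sat w f1 \/ sat w f2
  | FX f1 => sat (suffix w 1) f1
  | FU f1 f2 => exists k, sat (suffix w k) f2 /\ forall j, j < k -> sat (suffix w j) f1
  | FW f1 f2 => (forall k, sat (suffix w k) f1) \/
                exists k, sat (suffix w k) f2 /\ forall j, j < k -> sat (suffix w j) f1
  | FGF f1 => forall n, exists k, n <= k /\ sat (suffix w k) f1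
  | FFG f1 => exists n, forall k, n <= k -> sat (suffix w k) f1
  end.

Definition ltl_equiv (Ap : finType) (f g : formula Ap) : Prop :=
  forall w : word Ap, sat w f <-> sat w g.

(* Formulas with placeholders: formulas over Ap ∪ {star}, encoded as option Ap
   with None = star; at least one occurrence of star and none of ¬star. *)
Fixpoint has_star (A : Type) (f : formula (option A)) : bool :=
  match f with
  | FTrue | FFalse => false
  | FAtom a => if a is None then true else false
  | FNAtom _ => false
  | FAnd f1 f2 | FOr f1 f2 | FU f1 f2 | FW f1 f2 => has_star f1 || has_star f2
  | FX f1 | FGF f1 | FFG f1 => has_star f1
  end.

Fixpoint no_neg_star (A : Type) (f : formula (option A)) : bool :=
  match f with
  | FNAtom a => if a is None then false else true
  | FTrue | FFalse | FAtom _ => true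
  | FAnd f1 f2 | FOr f1 f2 | FU f1 f2 | FW f1 f2 => no_neg_star f1 && no_neg_star f2
  | FX f1 | FGF f1 | FFG f1 => no_neg_star f1
  end.

Definition placeholder_formula (A : Type) (f : formula (option A)) : Prop :=
  has_star f /\ no_neg_star f.

Fixpoint subst (A : Type) (f : formula (option A)) (psi : formula A) : formula A :=
  match f with
  | FTrue => FTrue
  | FFalse => FFalse
  | FAtom (Some a) => FAtom a
  | FAtom None => psi
  | FNAtom (Some a) => FNAtom a
  | FNAtom None => FFalse  (* unreachable: placeholder formulas contain no ¬star *)
  | FAnd f1 f2 => FAnd (subst f1 psi) (subst f2 psi)
  | FOr f1 f2 => FOr (subst f1 psi) (subst f2 psi)
  | FX f1 => FX (subst f1 psi)
  | FU f1 f2 => FU (subst f1 psi) (subst f2 psi)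
  | FW f1 f2 => FW (subst f1 psi) (subst f2 psi)
  | FGF f1 => FGF (subst f1 psi)
  | FFG f1 => FFG (subst f1 psi)
  end.

(* Main.v *)
Require Import Defs.
From mathcomp Require Import all_boot.
From Stdlib Require Import FunctionalExtensionality Classical.
Local Notation suffix := Defs.suffix.
Set Implicit Arguments.

Lemma suffix_suffix (Ap : finType) (w : word Ap) i j :
  suffix (suffix w i) j = suffix w (i + j).
Proof. apply: functional_extensionality => k; by rewrite /suffix addnA. Qed.

Lemma suffix0 (Ap : finType) (w : word Ap) : suffix w 0 = w.
Proof. by apply: functional_extensionality => k. Qed.

Lemma mono (Ap : finType) (f : formula (option Ap)) :
  no_neg_star f -> forall (p q : formula Ap) (w : word Ap),
  (forall i, sat (suffix w i) p -> sat (suffix w i) q) ->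
  sat w (subst f p) -> sat w (subst f q).
Proof.
induction f as [| |a|a|f1 IH1 f2 IH2|f1 IH1 f2 IH2|f1 IH1|f1 IH1 f2 IH2|f1 IH1 f2 IH2|f1 IH1|f1 IH1];
  intros Hn p q w H; simpl in *;
  have Hs : forall k, (forall i, sat (suffix (suffix w k) i) p -> sat (suffix (suffix w k) i) q)
    by (move=> k i; rewrite suffix_suffix; apply: H).
- by [].
- by [].
- destruct a; simpl; first by [].
  by move=> h; rewrite -(suffix0 w); apply: H; rewrite suffix0.
- by destruct a.
- move/andP: Hn => [h1 h2]; move=> [x y]; split; [exact: (IH1 h1 p q w H x) | exact: (IH2 h2 p q w H y)].
- move/andP: Hn => [h1 h2]; move=> [x|y]; [left; exact: (IH1 h1 p q w H x) | right; exact: (IH2 h2 p q w H y)].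
- move=> x; exact: (IH1 Hn p q _ (Hs 1) x).
- move/andP: Hn => [h1 h2]; move=> [k [a b]]; exists k; split.
  + exact: (IH2 h2 p q _ (Hs k) a).
  + move=> j hj; exact: (IH1 h1 p q _ (Hs j) (b j hj)).
- move/andP: Hn => [h1 h2]; move=> [a|[k [a b]]].
  + left=> k; exact: (IH1 h1 p q _ (Hs k) (a k)).
  + right; exists k; split.
    * exact: (IH2 h2 p q _ (Hs k) a).
    * move=> j hj; exact: (IH1 h1 p q _ (Hs j) (b j hj)).
- move=> a n; case: (a n) => k [hk b]; exists k; split=> //; exact: (IH1 Hn p q _ (Hs k) b).
- move=> [n a]; exists n => k hk; exact: (IH1 Hn p q _ (Hs k) (a k hk)).
Qed.

Theorem lemma1 (Ap : finType) :
  (forall (phi1 psi1 psi2 : formula Ap) (phi2 : formula (option Ap)),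
      placeholder_formula phi2 ->
      ltl_equiv (FW phi1 (subst phi2 (FU psi1 psi2)))
            (FOr (FU phi1 (subst phi2 (FU psi1 psi2))) (FG phi1))) /\
  (forall (phi1 : formula (option Ap)) (phi2 psi1 psi2 : formula Ap),
      placeholder_formula phi1 ->
      ltl_equiv (FW (subst phi1 (FU psi1 psi2)) phi2)
            (FOr (FAnd (FGF psi2) (FW (subst phi1 (FW psi1 psi2)) phi2))
                 (FU (subst phi1 (FU psi1 psi2))
                     (FOr phi2 (FG (subst phi1 FFalse)))))).
Proof.
split.
  move=> phi1 psi1 psi2 phi2 _ w /=; split.
  - by case=> [a|b]; [right; left|left].
  - by case=> [b|[a|[k [[] _]]]]; [right|left].
move=> phi1 phi2 psi1 psi2 [_ Hn] w /=.
set U := subst phi1 (FU psi1 psi2).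
set W := subst phi1 (FW psi1 psi2).
(* under GF psi2, U and W agree pointwise *)
have UW : forall i, sat (suffix w i) (FU psi1 psi2) -> sat (suffix w i) (FW psi1 psi2).
  by move=> i /= h; right.
have WU : (forall n, exists k, n <= k /\ sat (suffix w k) psi2) ->
  forall v, (exists m, v = suffix w m) ->
  forall i, sat (suffix v i) (FW psi1 psi2) -> sat (suffix v i) (FU psi1 psi2).
  move=> GF v [m ->] i /= [a|h //].
  case: (GF (m + i)) => k [hk pk].
  exists (k - (m + i)); split.
    by rewrite !suffix_suffix addnA subnKC.
  by move=> j _; apply: a.
split.
- move=> H.
  case: (classic (forall n, exists k, n <= k /\ sat (suffix w k) psi2)) => GF.
  + left; split=> //.
    case: H => [a|[k [a b]]].
    * left=> k; apply: (@mono _ _ Hn (FU psi1 psi2)) (a k) => i; rewrite suffix_suffix; exact: UW.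
    * right; exists k; split=> // j hj.
      apply: (@mono _ _ Hn (FU psi1 psi2)) (b j hj) => i; rewrite suffix_suffix; exact: UW.
  + right.
    have [n Hnot] : exists n, forall k, n <= k -> ~ sat (suffix w k) psi2.
      apply: NNPP => hc; apply: GF => n; apply: NNPP => hc2; apply: hc; exists n => k hk pk.
      by apply: hc2; exists k.
    case: H => [a|[k [a b]]].
    * exists n; split; last by move=> j _; apply: a.
      right; left=> k.
      apply: (@mono _ _ Hn (FU psi1 psi2)); last by rewrite suffix_suffix; apply: a.
      move=> i /= [m [pm _]]; apply: (Hnot (n + (k + i) + m)); first by rewrite -!addnA leq_addr.
      by move: pm; rewrite !suffix_suffix !addnA.
    * by exists k; split=> //; left.
- case=> [[GF [a|[k [a b]]]]|[k [[a|a] b]]].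
  + left=> k; apply: (@mono _ _ Hn (FW psi1 psi2)) (a k) => i; rewrite suffix_suffix.
    move=> h; have := (WU GF w (ex_intro _ 0 (esym (suffix0 w))) (k + i)).
    by apply.
  + right; exists k; split=> // j hj.
    apply: (@mono _ _ Hn (FW psi1 psi2)) (b j hj) => i; rewrite suffix_suffix.
    move=> h; have := (WU GF w (ex_intro _ 0 (esym (suffix0 w))) (j + i)).
    by apply.
  + by right; exists k.
  + left=> j; case: (leqP k j) => hkj.
    * case: a => [a|[m [[] _]]].
      have := a (j - k); rewrite suffix_suffix subnKC // => h.
      by apply: (@mono _ _ Hn (FFalse)) h => i.
    * exact: b.
Qed.
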